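(* For all positive integers $s,k$ and every integer $n\geq 2$, the graph $sL_{n+1}\cup kL_n$ (the disjoint union of $s$ copies of $L_{n+1}$ and $k$ copies of $L_n$) is $C_4$-supermagic.
   Context: All graphs are finite and simple. For a graph $H$, a graph $G=(V,E)$ has an $H$-covering if every edge of $G$ belongs to a subgraph of $G$ isomorphic to $H$. For such $G$, an $H$-magic labeling is a bijection $\lambda: V\cup E\to\{1,2,\dots,|V|+|E|\}$ for which there is a constant $c$ such that for every subgraph $H'=(V',E')$ of $G$ isomorphic to $H$, $\sum_{v\in V'}\lambda(v)+\sum_{e\in E'}\lambda(e)=c$. It is $H$-supermagic if moreover $\{\lambda(v):v\in V\}=\{1,\dots,|V|\}$; $G$ is $H$-supermagic if it admits such a labeling. $C_k$ is the cycle of length $k$. $sG$ denotes the disjoint union of $s$ copies of $G$, and $\cup$ denotes disjoint union. The ladder $L_n=P_n\times P_2$ ($n\ge2$) has vertices $u_i,v_i$ ($1\le i\le n$) and edges $u_iv_i$ ($1\le i\le n$), $u_iu_{i+1}$ and $v_iv_{i+1}$ ($1\le i\le n-1$). *)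

(* Defs.v *)
From mathcomp Require Import all_boot.
Set Implicit Arguments. Unset Strict Implicit. Unset Printing Implicit Defensive.

Section Graphs.
Variable V : finType.
Variable adj : rel V.

Definition edges : {set {set V}} :=
  [set e : {set V} | [exists x, [exists y, adj x y && (e == [set x; y])]]].

Definition is_C4_sub (F : {set {set V}}) : Prop :=
  F \subset edges /\
  exists a b c d : V,
    [&& a != b, a != c, a != d, b != c, b != d & c != d] /\
    F = [set [set a; b]; [set b; c]; [set c; d]; [set d; a]].

Definition C4_vertices (F : {set {set V}}) : {set V} := \bigcup_(e in F) e.

Definition C4_covering : Prop :=
  forall e, e \in edges -> exists F, is_C4_sub F /\ e \in F.

Definition is_total_labeling (lv : V -> nat) (le : {set V} -> nat) : Prop :=
  perm_eq ([seq lv v | v <- enum V] ++ [seq le e | e <- enum edges])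
          (iota 1 (#|V| + #|edges|)).

Definition C4_weight (lv : V -> nat) (le : {set V} -> nat) (F : {set {set V}}) :=
  \sum_(v in C4_vertices F) lv v + \sum_(e in F) le e.

Definition C4_magic_labeling lv le : Prop :=
  is_total_labeling lv le /\
  exists c, forall F, is_C4_sub F -> C4_weight lv le F = c.

Definition C4_supermagic_labeling lv le : Prop :=
  C4_magic_labeling lv le /\
  perm_eq [seq lv v | v <- enum V] (iota 1 #|V|).

Definition C4_supermagic : Prop :=
  C4_covering /\ exists lv le, C4_supermagic_labeling lv le.

End Graphs.

(* Ladder L_m = P_m x P_2 on vertices 'I_m * bool:
   (i,false) = u_{i+1}, (i,true) = v_{i+1}. *)
Definition ladder_adj (m : nat) : rel ('I_m * bool) :=
  fun x y =>
    ((x.1 == y.1) && (x.2 != y.2)) ||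
    ((x.2 == y.2) && ((x.1.+1 == y.1 :> nat) || (y.1.+1 == x.1 :> nat))).

Definition copies_adj (W : finType) (s : nat) (a : rel W) : rel ('I_s * W) :=
  fun x y => (x.1 == y.1) && a x.2 y.2.

Definition dunion_adj (W1 W2 : finType) (a1 : rel W1) (a2 : rel W2)
  : rel (W1 + W2) :=
  fun x y => match x, y with
             | inl x1, inl y1 => a1 x1 y1
             | inr x2, inr y2 => a2 x2 y2
             | _, _ => false
             end.

Definition ladders_adj (s k n : nat) :=
  dunion_adj (@copies_adj _ s (@ladder_adj n.+1)) (@copies_adj _ k (@ladder_adj n)).

(* Main.v *)
Require Import Defs.
From mathcomp Require Import all_boot zify.
Set Implicit Arguments. Unset Strict Implicit. Unset Printing Implicit Defensive.

Lemma sum2 (T : finType) (F : T -> nat) a b :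
  a != b -> \sum_(i in [set a; b]) F i = F a + F b.
Proof. by move=> ab; rewrite big_setU1 ?big_set1 // inE. Qed.

Lemma sum4 (T : finType) (F : T -> nat) a b c d :
  [&& a != b, a != c, a != d, b != c, b != d & c != d] ->
  \sum_(i in [set a; b; c; d]) F i = F a + F b + F c + F d.
Proof.
case/andP=> ab /and5P[ac ad bc bd cd].
have -> : [set a; b; c; d] = a |: (b |: (c |: [set d])).
  by apply/setP=> z; rewrite !inE !orbA.
rewrite big_setU1 /=; last by rewrite !inE !negb_or ab ac ad.
rewrite big_setU1 /=; last by rewrite !inE !negb_or bc bd.
by rewrite big_setU1 ?big_set1 ?inE // !addnA.
Qed.

Lemma dm_eq Q i i' q q' : q < Q -> q' < Q ->
  (i * Q + q == i' * Q + q') = (i == i') && (q == q').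
Proof.
move=> hq hq'; apply/eqP/andP => [E|[/eqP-> /eqP->]//].
have Q0 : 0 < Q by lia.
have E1 := congr1 (modn^~ Q) E; have E2 := congr1 (divn^~ Q) E.
move: E1 E2 => /=; rewrite !modnMDl !divnMDl // !modn_small // !divn_small // !addn0.
by move=> -> ->.
Qed.

Lemma dm_eq1 Q i i' q q' : q < Q -> q' < Q ->
  (i * Q + q + Q == i' * Q + q') = (i.+1 == i') && (q == q').
Proof. by move=> hq hq'; rewrite -(@dm_eq Q) // mulSn; apply/eqP/eqP; lia. Qed.

Notation Vt s k n := (('I_s * ('I_n.+1 * bool)) + ('I_k * ('I_n * bool)))%type.

Definition xof s k n (w : Vt s k n) : nat :=
  match w with
  | inl (q, (i, _)) => i * (s + k) + q
  | inr (q, (i, _)) => i * (s + k) + (s + q)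
  end.
Definition sd s k n (w : Vt s k n) : bool :=
  match w with inl (_, (_, b)) => b | inr (_, (_, b)) => b end.

Lemma adjE s k n (w w' : Vt s k n) : @ladders_adj s k n w w' =
  ((xof w == xof w') && (sd w != sd w')) ||
  ((sd w == sd w') && ((xof w + (s + k) == xof w') || (xof w' + (s + k) == xof w))).
Proof.
case: w => [[q [i b]]|[q [i b]]]; case: w' => [[q' [i' b']]|[q' [i' b']]];
rewrite /ladders_adj /dunion_adj /copies_adj /ladder_adj /=;
have hq := ltn_ord q; have hq' := ltn_ord q'.
- have -> : (q == q') = (q == q' :> nat) by [].
  have -> : (i == i') = (i == i' :> nat) by [].
  rewrite ?(@dm_eq1 (s+k)) ?(@dm_eq (s+k)); lia.
- rewrite ?(@dm_eq1 (s+k)) ?(@dm_eq (s+k)); lia.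
- rewrite ?(@dm_eq1 (s+k)) ?(@dm_eq (s+k)); lia.
- have -> : (q == q') = (q == q' :> nat) by [].
  have -> : (i == i') = (i == i' :> nat) by [].
  rewrite ?(@dm_eq1 (s+k)) ?(@dm_eq (s+k)); lia.
Qed.

Definition Mn s k n := n * (s + k) + s.
Definition hn s k n := n.-1 * (s + k) + s.

Lemma hM s k n : 0 < n -> Mn s k n = hn s k n + (s + k).
Proof. by case: n => // n _; rewrite /Mn /hn /= mulSn; lia. Qed.

Lemma xof_lt s k n (w : Vt s k n) : xof w < Mn s k n.
Proof.
rewrite /Mn; case: w => [[q [i b]]|[q [i b]]] /=.
  have hq := ltn_ord q; have hi := ltn_ord i.
  have : i * (s + k) <= n * (s + k) by rewrite leq_mul2r; lia.
  lia.
have hq := ltn_ord q; have hi := ltn_ord i.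
have : i.+1 * (s + k) <= n * (s + k) by rewrite leq_mul2r; lia.
rewrite mulSn; lia.
Qed.

Lemma xof_inj s k n (w w' : Vt s k n) : xof w = xof w' -> sd w = sd w' -> w = w'.
Proof.
case: w => [[q [i b]]|[q [i b]]]; case: w' => [[q' [i' b']]|[q' [i' b']]] /=;
have hq := ltn_ord q; have hq' := ltn_ord q' => /eqP E Eb; subst b'.
- move: E; rewrite (@dm_eq (s+k)); try lia.
  by case/andP=> /eqP/val_inj-> /eqP/val_inj->.
- move: E; rewrite (@dm_eq (s+k)); lia.
- move: E; rewrite (@dm_eq (s+k)); lia.
- move: E; rewrite (@dm_eq (s+k)); try lia.
  by case/andP=> /eqP/val_inj-> /eqP E; congr (inr (_, (_, _))); apply: val_inj => /=; lia.
Qed.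

Lemma exists_vertex s k n x b : x < Mn s k n ->
  exists w : Vt s k n, xof w = x /\ sd w = b.
Proof.
rewrite /Mn => hx.
have Q0 : 0 < s + k by rewrite lt0n; apply/eqP => E; move: hx; rewrite E muln0; lia.
have dx := divn_eq x (s + k); have mx := ltn_pmod x Q0.
case: (ltnP (x %% (s + k)) s) => hq.
  have hi : x %/ (s + k) < n.+1 by rewrite ltn_divLR // mulSn; lia.
  by exists (inl (Ordinal hq, (Ordinal hi, b))); split => //=; lia.
have hq' : x %% (s + k) - s < k by lia.
have hi : x %/ (s + k) < n.
  rewrite ltnNge; apply/negP => hn.
  have : n * (s + k) <= x %/ (s + k) * (s + k) by rewrite leq_mul2r hn orbT.
  lia.
by exists (inr (Ordinal hq', (Ordinal hi, b))); split => //=; lia.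
Qed.

Lemma sd_xof_neq s k n (u v : Vt s k n) :
  (xof u != xof v) || (sd u != sd v) -> u != v.
Proof. by apply: contraL => /eqP->; rewrite !eqxx. Qed.

Definition mkv s k n (w0 : Vt s k n) x b : Vt s k n :=
  odflt w0 [pick w | (xof w == x) && (sd w == b)].

Lemma mkvP s k n (w0 : Vt s k n) x b : x < Mn s k n ->
  xof (mkv w0 x b) = x /\ sd (mkv w0 x b) = b.
Proof.
move=> hx; rewrite /mkv; case: pickP => [w /andP[/eqP-> /eqP->] //|H].
have [w [E1 E2]] := exists_vertex b hx.
by move: (H w); rewrite E1 E2 !eqxx.
Qed.

Lemma mkvE s k n (w0 w : Vt s k n) : w = mkv w0 (xof w) (sd w).
Proof.
have [E1 E2] := mkvP w0 (sd w) (xof_lt w).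
by apply: xof_inj.
Qed.

Definition Aj Q (x : nat) (b : bool) (x' : nat) (b' : bool) :=
  ((x == x') && (b != b')) || ((b == b') && ((x + Q == x') || (x' + Q == x))).

Definition lvx M x (b : bool) := if b then 2 * M - x else x.+1.
Definition elx M h x (b : bool) x' :=
  if x == x' then 3 * M - x
  else if b then 3 * M + h + 1 + minn x x' else 3 * M + 1 + minn x x'.

Lemma sq_arith Q M h xa xb xc xd ba bb bc bd :
  0 < Q -> M = h + Q -> xa < M -> xb < M -> xc < M -> xd < M ->
  Aj Q xa ba xb bb -> Aj Q xb bb xc bc -> Aj Q xc bc xd bd -> Aj Q xd bd xa ba ->
  (xa != xc) || (ba != bc) -> (xb != xd) || (bb != bd) ->
  lvx M xa ba + lvx M xb bb + lvx M xc bc + lvx M xd bd +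
  (elx M h xa ba xb + elx M h xb bb xc + elx M h xc bc xd + elx M h xd bd xa)
  = 16 * M + h + 4 - Q.
Proof.
rewrite /Aj /lvx /elx => Q0 HM ha hb hc hd.
case: ba; case: bb; case: bc; case: bd => /= h1 h2 h3 h4 d1 d2;
rewrite ?andbT ?andbF ?orbF ?andTb ?andFb ?orFb ?orbF in h1 h2 h3 h4 d1 d2;
repeat match goal with H : is_true (_ || _) |- _ => case/orP: H => H end;
repeat match goal with H : is_true (_ == _) |- _ => move/eqP: H => H end;
try (exfalso; lia);
repeat (case: ifP => ?; try (exfalso; lia)); lia.
Qed.

Lemma edge_arith Q M h xa xb xc xd ba bb bc bd :
  0 < Q -> M = h + Q -> xa < M -> xb < M -> xc < M -> xd < M ->
  Aj Q xa ba xb bb -> Aj Q xc bc xd bd ->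
  elx M h xa ba xb = elx M h xc bc xd ->
  (xa = xc /\ ba = bc /\ xb = xd /\ bb = bd) \/
  (xa = xd /\ ba = bd /\ xb = xc /\ bb = bc).
Proof.
rewrite /Aj /elx => Q0 HM ha hb hc hd.
case: ba; case: bb; case: bc; case: bd => /= h1 h2;
repeat (case: ifP => ?); lia.
Qed.

Lemma elx_range Q M h xa xb ba bb :
  0 < Q -> M = h + Q -> xa < M -> xb < M -> Aj Q xa ba xb bb ->
  2 * M < elx M h xa ba xb <= 3 * M + 2 * h.
Proof.
rewrite /Aj /elx => Q0 HM ha hb.
case: ba; case: bb => /= h1; repeat (case: ifP => ?); lia.
Qed.

Lemma lvx_inj M xa xb ba bb : xa < M -> xb < M ->
  lvx M xa ba = lvx M xb bb -> xa = xb /\ ba = bb.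
Proof. rewrite /lvx; case: ba; case: bb; lia. Qed.

Definition lv s k n (w : Vt s k n) := lvx (Mn s k n) (xof w) (sd w).
Definition elab s k n (w w' : Vt s k n) :=
  elx (Mn s k n) (hn s k n) (xof w) (sd w) (xof w').
Definition lower s k n (w w' : Vt s k n) :=
  (xof w < xof w') || ((xof w == xof w') && ~~ sd w).
Definition lab s k n (w w' : Vt s k n) :=
  if @ladders_adj s k n w w' && lower w w' then elab w w' else 0.
Definition le s k n (e : {set Vt s k n}) := \sum_(w in e) \sum_(w' in e) lab w w'.

Lemma adjAj s k n (w w' : Vt s k n) :
  @ladders_adj s k n w w' = Aj (s + k) (xof w) (sd w) (xof w') (sd w').
Proof. by rewrite adjE. Qed.

Lemma adj_sym s k n (w w' : Vt s k n) :
  @ladders_adj s k n w w' = @ladders_adj s k n w' w.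
Proof. rewrite !adjE; lia. Qed.

Lemma adj_neq s k n (w w' : Vt s k n) : 0 < s + k ->
  @ladders_adj s k n w w' -> w != w'.
Proof. move=> Q0; rewrite adjE => H; apply: sd_xof_neq; lia. Qed.

Lemma le_edge s k n (w w' : Vt s k n) : 0 < s + k ->
  @ladders_adj s k n w w' -> le [set w; w'] = elab w w'.
Proof.
move=> Q0 H; have Hn := adj_neq Q0 H.
rewrite /le !sum2 //.
have H' : @ladders_adj s k n w' w by rewrite adj_sym.
have Hww : @ladders_adj s k n w w = false by rewrite adjE; lia.
have Hw'w' : @ladders_adj s k n w' w' = false by rewrite adjE; lia.
rewrite /lab H H' Hww Hw'w' /=.
move: H; rewrite adjE /lower /elab /elx => H.
repeat (case: ifP => ?); lia.
Qed.

Lemma in_edgesE s k n (a b : Vt s k n) : a != b ->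
  ([set a; b] \in edges (@ladders_adj s k n)) = @ladders_adj s k n a b.
Proof.
move=> ab; apply/idP/idP.
  rewrite /edges inE => /existsP[x /existsP[y /andP[Hxy /eqP E]]].
  have ha : a \in [set x; y] by rewrite -E !inE eqxx.
  have hb : b \in [set x; y] by rewrite -E !inE eqxx orbT.
  move: ha hb; rewrite !inE => /orP[]/eqP ea /orP[]/eqP eb; subst.
  - by rewrite eqxx in ab.
  - by [].
  - by rewrite adj_sym.
  - by rewrite eqxx in ab.
move=> H; rewrite /edges inE; apply/existsP; exists a; apply/existsP; exists b.
by rewrite H eqxx.
Qed.

Lemma neq_sd_xof s k n (u v : Vt s k n) :
  u != v -> (xof u != xof v) || (sd u != sd v).
Proof.
move=> H; rewrite -negb_and; apply: contra H => /andP[/eqP E1 /eqP E2].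
by rewrite (xof_inj E1 E2).
Qed.

Lemma set2_neq (T : finType) (a b c d : T) :
  a \notin [set c; d] -> [set a; b] != [set c; d].
Proof. by move=> H; apply: contra H => /eqP <-; rewrite !inE eqxx. Qed.

Lemma set2_neq' (T : finType) (a b c d : T) :
  b \notin [set c; d] -> [set a; b] != [set c; d].
Proof. by move=> H; apply: contra H => /eqP <-; rewrite !inE eqxx orbT. Qed.

Lemma C4_const s k n : 0 < s -> 0 < n -> forall F,
  is_C4_sub (@ladders_adj s k n) F ->
  C4_weight (@lv s k n) (@le s k n) F = 16 * Mn s k n + hn s k n + 4 - (s + k).
Proof.
move=> hs hn F [Hsub [a [b [c [d [Hd EF]]]]]].
have Q0 : 0 < s + k by lia.
move: (Hd) => /andP[ab /and5P[ac ad bc bd cd]].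
have ba : b != a by rewrite eq_sym.
have ca : c != a by rewrite eq_sym.
have da : d != a by rewrite eq_sym.
have Hab : @ladders_adj s k n a b.
  by rewrite -in_edgesE //; apply: (subsetP Hsub); rewrite EF !inE eqxx.
have Hbc : @ladders_adj s k n b c.
  by rewrite -in_edgesE //; apply: (subsetP Hsub); rewrite EF !inE eqxx ?orbT.
have Hcd : @ladders_adj s k n c d.
  by rewrite -in_edgesE //; apply: (subsetP Hsub); rewrite EF !inE eqxx ?orbT.
have Hda : @ladders_adj s k n d a.
  by rewrite -in_edgesE //; apply: (subsetP Hsub); rewrite EF !inE eqxx ?orbT.
rewrite /C4_weight /C4_vertices.
have -> : \bigcup_(e in F) e = [set a; b; c; d].
  apply/setP => z; apply/bigcupP/idP.
    case=> e; rewrite EF !inE -!orbA => /or4P[]/eqP-> ;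
    by rewrite !inE => /orP[]/eqP->; rewrite !eqxx ?orbT.
  rewrite !inE -!orbA => /or4P[]/eqP->.
  - by exists [set a; b]; rewrite ?EF !inE eqxx ?orbT.
  - by exists [set a; b]; rewrite ?EF !inE eqxx ?orbT.
  - by exists [set b; c]; rewrite ?EF !inE eqxx ?orbT.
  - by exists [set c; d]; rewrite ?EF !inE eqxx ?orbT.
rewrite sum4 // EF sum4; last first.
  have e1 : [set a; b] != [set b; c] by apply: set2_neq; rewrite !inE negb_or ab ac.
  have e2 : [set a; b] != [set c; d] by apply: set2_neq; rewrite !inE negb_or ac ad.
  have e3 : [set a; b] != [set d; a] by apply: set2_neq'; rewrite !inE negb_or bd ba.
  have e4 : [set b; c] != [set c; d] by apply: set2_neq; rewrite !inE negb_or bc bd.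
  have e5 : [set b; c] != [set d; a] by apply: set2_neq; rewrite !inE negb_or bd ba.
  have e6 : [set c; d] != [set d; a] by apply: set2_neq; rewrite !inE negb_or cd ca.
  by rewrite e1 e2 e3 e4 e5 e6.
rewrite !le_edge // /lv /elab.
apply: sq_arith => //; first exact: hM.
- exact: xof_lt.
- exact: xof_lt.
- exact: xof_lt.
- exact: xof_lt.
- by rewrite -adjAj.
- by rewrite -adjAj.
- by rewrite -adjAj.
- by rewrite -adjAj.
- exact: neq_sd_xof.
- exact: neq_sd_xof.
Qed.


Definition sq s k n (w0 : Vt s k n) y : {set {set Vt s k n}} :=
  [set [set mkv w0 y false; mkv w0 y true];
       [set mkv w0 y true; mkv w0 (y + (s + k)) true];
       [set mkv w0 (y + (s + k)) true; mkv w0 (y + (s + k)) false];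
       [set mkv w0 (y + (s + k)) false; mkv w0 y false]].

Lemma square_C4 s k n (w0 : Vt s k n) y : 0 < s + k -> y + (s + k) < Mn s k n ->
  is_C4_sub (@ladders_adj s k n) (sq w0 y).
Proof.
move=> Q0 hy.
have hy' : y < Mn s k n by lia.
have [x00 s00] := mkvP w0 false hy'.
have [x01 s01] := mkvP w0 true hy'.
have [x10 s10] := mkvP w0 false hy.
have [x11 s11] := mkvP w0 true hy.
have n1 : mkv w0 y false != mkv w0 y true by apply: sd_xof_neq; rewrite s00 s01 orbT.
have n2 : mkv w0 y false != mkv w0 (y + (s + k)) true by apply: sd_xof_neq; rewrite s00 s11 orbT.
have n3 : mkv w0 y false != mkv w0 (y + (s + k)) false
  by apply: sd_xof_neq; rewrite x00 ?x10; lia.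
have n4 : mkv w0 y true != mkv w0 (y + (s + k)) true
  by apply: sd_xof_neq; rewrite x01 ?x11; lia.
have n5 : mkv w0 y true != mkv w0 (y + (s + k)) false by apply: sd_xof_neq; rewrite s01 s10 orbT.
have n6 : mkv w0 (y + (s + k)) true != mkv w0 (y + (s + k)) false
  by apply: sd_xof_neq; rewrite s11 s10 orbT.
split.
  apply/subsetP => e He; rewrite !inE -!orbA in He; case/or4P: He => /eqP->;
  (rewrite in_edgesE; last by rewrite // eq_sym);
  by rewrite adjE ?x00 ?x01 ?x10 ?x11 ?s00 ?s01 ?s10 ?s11 !eqxx /= ?orbT.
exists (mkv w0 y false), (mkv w0 y true), (mkv w0 (y + (s + k)) true),
  (mkv w0 (y + (s + k)) false).
by rewrite n1 n2 n3 n5 n4 n6.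
Qed.

Lemma sq_mem s k n (w0 : Vt s k n) y (u v : Vt s k n) :
  [set u; v] \in sq w0 y = [|| [set u; v] == [set mkv w0 y false; mkv w0 y true],
       [set u; v] == [set mkv w0 y true; mkv w0 (y + (s + k)) true],
       [set u; v] == [set mkv w0 (y + (s + k)) true; mkv w0 (y + (s + k)) false] |
       [set u; v] == [set mkv w0 (y + (s + k)) false; mkv w0 y false]].
Proof. by rewrite /sq !inE -!orbA. Qed.

Lemma covering s k n : 0 < s -> 2 <= n -> C4_covering (@ladders_adj s k n).
Proof.
move=> hs hn e; rewrite /edges inE => /existsP[x /existsP[y /andP[Hxy /eqP->]]].
have Q0 : 0 < s + k by lia.
have hx := xof_lt x; have hy := xof_lt y.
have M2 : 2 * (s + k) <= Mn s k n.
  rewrite /Mn; have : 2 * (s + k) <= n * (s + k) by rewrite leq_mul2r hn orbT.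
  lia.
have -> : [set x; y] = [set mkv x (xof x) (sd x); mkv x (xof y) (sd y)].
  by rewrite -!mkvE.
move: Hxy hx hy; rewrite adjE.
move: (xof x) (xof y) (sd x) (sd y) => X Y bx byy.
case/orP => [/andP[/eqP <- Hb] | /andP[/eqP <- /orP[/eqP <- | /eqP <-]]] hx hy.
- have -> : byy = ~~ bx by move: Hb; case: bx; case: byy.
  clear Hb.
  case: (ltnP (X + (s + k)) (Mn s k n)) => hX.
    exists (sq x X); split; first exact: square_C4.
    case: bx; rewrite sq_mem /= ?eqxx //.
    by rewrite (setUC [set mkv x X true]) eqxx.
  exists (sq x (X - (s + k))); split; first by apply: square_C4 => //; lia.
  rewrite sq_mem subnK; last by lia.
  case: bx; rewrite /= ?eqxx ?orbT //.
  by rewrite (setUC [set mkv x X false]) eqxx ?orbT.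
- exists (sq x X); split; first exact: square_C4.
  case: bx; rewrite sq_mem /= ?eqxx ?orbT //.
  by rewrite (setUC [set mkv x X false]) eqxx ?orbT.
- exists (sq x Y); split; first exact: square_C4.
  case: bx; rewrite sq_mem /= ?eqxx ?orbT //.
  by rewrite (setUC [set mkv x (Y + (s + k)) true]) eqxx ?orbT.
Qed.


Lemma vperm s k n :
  perm_eq [seq @lv s k n v | v <- enum (Vt s k n : finType)] (iota 1 (2 * Mn s k n)).
Proof.
apply: uniq_perm.
- rewrite map_inj_in_uniq ?enum_uniq // => u v _ _ E.
  have [E1 E2] := lvx_inj (xof_lt u) (xof_lt v) E.
  exact: xof_inj.
- exact: iota_uniq.
move=> z; apply/mapP/idP => [[w _ ->]|].
  rewrite mem_iota /lv /lvx; have := xof_lt w; case: (sd w); lia.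
rewrite mem_iota => hz; case: (leqP z (Mn s k n)) => hzM.
  have hx : z.-1 < Mn s k n by lia.
  have [w [E1 E2]] := exists_vertex false hx.
  by exists w; [rewrite mem_enum | rewrite /lv E1 E2 /lvx; lia].
have hx : 2 * Mn s k n - z < Mn s k n by lia.
have [w [E1 E2]] := exists_vertex true hx.
by exists w; [rewrite mem_enum | rewrite /lv E1 E2 /lvx; lia].
Qed.

Lemma edge_dest s k n e : e \in edges (@ladders_adj s k n) ->
  exists a b, @ladders_adj s k n a b /\ e = [set a; b].
Proof.
rewrite /edges inE => /existsP[x /existsP[y /andP[Hxy /eqP->]]].
by exists x, y.
Qed.

Lemma eperm s k n : 0 < s -> 0 < n ->
  perm_eq [seq @le s k n e | e <- enum (edges (@ladders_adj s k n))]
          (iota (2 * Mn s k n).+1 (Mn s k n + 2 * hn s k n)).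
Proof.
move=> hs hn0; have Q0 : 0 < s + k by lia.
have HM := hM s k hn0.
apply: uniq_perm.
- rewrite map_inj_in_uniq ?enum_uniq // => u v; rewrite !mem_enum.
  move=> /edge_dest[a [b [Hab ->]]] /edge_dest[c [d [Hcd ->]]].
  rewrite !le_edge // /elab => E.
  move: Hab Hcd; rewrite !adjAj => Hab Hcd.
  case: (edge_arith Q0 HM (xof_lt a) (xof_lt b) (xof_lt c) (xof_lt d) Hab Hcd E)
    => [[E1 [E2 [E3 E4]]]|[E1 [E2 [E3 E4]]]].
    by rewrite (xof_inj E1 E2) (xof_inj E3 E4).
  by rewrite (xof_inj E1 E2) (xof_inj E3 E4) setUC.
- exact: iota_uniq.
move=> z; apply/mapP/idP => [[e]|].
  rewrite mem_enum => /edge_dest[a [b [Hab ->]]] ->.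
  rewrite le_edge // /elab mem_iota.
  move: (Hab); rewrite adjAj => Hab'.
  have := elx_range Q0 HM (xof_lt a) (xof_lt b) Hab'; lia.
rewrite mem_iota => hz.
have mkedge : forall a b : Vt s k n, @ladders_adj s k n a b ->
    elab a b = z -> exists2 e, e \in enum (edges (@ladders_adj s k n)) & z = le e.
  move=> a b Hab E; exists [set a; b]; last by rewrite le_edge.
  by rewrite mem_enum in_edgesE // adj_neq.
case: (leqP z (3 * Mn s k n)) => h1.
  have hx : 3 * Mn s k n - z < Mn s k n by lia.
  have [a [Ea Sa]] := exists_vertex false hx.
  have [b [Eb Sb]] := exists_vertex true hx.
  apply: (mkedge a b); first by rewrite adjE Ea Eb Sa Sb eqxx.
  by rewrite /elab /elx Ea Eb eqxx; lia.
case: (leqP z (3 * Mn s k n + hn s k n)) => h2.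
  have hx : z - 3 * Mn s k n - 1 < Mn s k n by lia.
  have hx' : z - 3 * Mn s k n - 1 + (s + k) < Mn s k n by lia.
  have [a [Ea Sa]] := exists_vertex false hx.
  have [b [Eb Sb]] := exists_vertex false hx'.
  apply: (mkedge a b); first by rewrite adjE Ea Eb Sa Sb !eqxx /= orbT.
  rewrite /elab /elx Ea Eb Sa; case: ifP; lia.
have hx : z - 3 * Mn s k n - hn s k n - 1 < Mn s k n by lia.
have hx' : z - 3 * Mn s k n - hn s k n - 1 + (s + k) < Mn s k n by lia.
have [a [Ea Sa]] := exists_vertex true hx.
have [b [Eb Sb]] := exists_vertex true hx'.
apply: (mkedge a b); first by rewrite adjE Ea Eb Sa Sb !eqxx /= orbT.
rewrite /elab /elx Ea Eb Sa; case: ifP; lia.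
Qed.


Unset Implicit Arguments.

Theorem theorem10 (s k n : nat) :
  0 < s -> 0 < k -> 2 <= n -> C4_supermagic (@ladders_adj s k n).
Proof.
move=> hs hk hn2; split; first exact: covering.
exists (@lv s k n), (@le s k n).
have hn0 : 0 < n by lia.
have pv := vperm s k n; have pe := eperm k hs hn0.
have cV : #|Vt s k n : finType| = 2 * Mn s k n.
  by rewrite cardE -(size_map (@lv s k n)) (perm_size pv) size_iota.
have cE : #|edges (@ladders_adj s k n)| = Mn s k n + 2 * hn s k n.
  by rewrite cardE -(size_map (@le s k n)) (perm_size pe) size_iota.
split; last by rewrite cV.
split.
  rewrite /is_total_labeling.
  by rewrite cV cE iotaD add1n; apply: perm_cat.
exists (16 * Mn s k n + hn s k n + 4 - (s + k)) => F HF.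
exact: C4_const.
Qed.
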